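(* Assume $\omega$ satisfies $(\mathbf{TC})_{C,g}$ or $(\mathbf{TCG})_{C,g}$. For each $N\in\mathbb{N}$ and $T>0$, \[ \mathbb{E}\big[\|(W^{\beta,\omega}_N)^{-1}\|_T^2\big]<\infty\qquad\text{and}\qquad\mathbb{E}\Big[\Big\|\frac{\partial}{\partial\beta}\log W^{\beta,\omega}_N\Big\|_T^2\Big]<\infty, \] where the norms are taken in the variable $\beta$.
   Context: Fix $d\ge3$; $(S_n)$ is a random walk on $\mathbb{Z}^d$ with i.i.d. bounded increments, law $P^S_0$, expectation $E^S_0$. Independently, $\omega=(\omega_{n,z})_{(n,z)\in\mathbb{N}\times\mathbb{Z}^d}$ is a Markovian random field with law $\mathbb{P}$ (expectation $\mathbb{E}$), $\mathbb{E}[e^{\beta\omega_{n,z}}]<\infty$ for all real $\beta$ (Markovian: conditional law of $(\omega_v)_{v\in V}$ given $\mathscr{F}_{V^c}$ equals that given $\mathscr{F}_{\partial V}$, $\mathscr{F}_\Lambda=\sigma(\omega_v:v\in\Lambda)$). $d_1(A,B)=\inf\{|x-y|_1+|m-k|:(m,x)\in A,(k,y)\in B\}$. $(\mathbf{TC})_{C,g}$: for finite $\Delta\subseteq V$ with $d_1(\Delta,V^c)>1$ and $A\subseteq V^c$, the Radon–Nikodym derivative of the conditional law of $(\omega_v)_{v\in\Delta}$ given $\omega|_{V^c}=\eta$ w.r.t. that given $\omega|_{V^c}=\eta'$ is at most $\exp(C\sum_{(m,x)\in\partial\Delta,(k,y)\in\partial A}e^{-g|x-y|_1-g|m-k|})$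 whenever $\eta,\eta'\in[0,\infty)^{\mathbb{N}\times\mathbb{Z}^d}$ agree on $V^c\setminus A$; $(\mathbf{TCG})_{C,g}$: same with sum over $(m,x)\in\Delta,(k,y)\in A$. $Z^{\beta,\omega}_N=E^S_0[\exp(\beta\sum_{k=1}^N\omega_{k,S_k})]$ and $W^{\beta,\omega}_N=Z^{\beta,\omega}_N/\mathbb{E}[Z^{\beta,\omega}_N]$. For a Borel function $f$ of $\beta$ and $T>0$, $\|f\|_T=\operatorname{ess\,sup}\{|f(\beta)|:0\le\beta\le T\}$. *)

(* Defs.v *)
From HB Require Import structures.
From mathcomp Require Import all_boot all_order all_algebra.
From mathcomp Require Import all_classical all_reals all_analysis ess_sup_inf.

Set Implicit Arguments.
Unset Strict Implicit.
Unset Printing Implicit Defensive.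

Import Order.TTheory GRing.Theory Num.Theory.
Import numFieldNormedType.Exports.
Local Open Scope classical_set_scope.
Local Open Scope ring_scope.

(* Sites of the space-time lattice N x Z^d; Z^d is represented by 'rV[int]_d. *)
Definition site (d : nat) : Type := (nat * 'rV[int]_d)%type.

Definition dist1 (d : nat) (u v : site d) : nat :=
  (\sum_(i < d) `|u.2 ord0 i - v.2 ord0 i|%N + `|(u.1 : int) - (v.1 : int)|%N)%N.

Definition bdry (d : nat) (L : set (site d)) : set (site d) :=
  [set u | ~ L u /\ exists2 v, L v & dist1 u v = 1%N].

Definition cylsig (d : nat) (R : realType) (L : set (site d))
  : set (set (site d -> R)) :=
  <<s [set E | exists v (B : set R),
        [/\ L v, measurable B & E = (fun eta : site d -> R => eta v) @^-1` B]] >>.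

Definition cyl_meas_fun (d : nat) (R : realType) (L : set (site d))
  (h : (site d -> R) -> R) : Prop :=
  forall B : set R, measurable B -> cylsig L (h @^-1` B).

(* Markov property: for every V and every F_V-event E, the conditional
   probability P(omega in E | F_{V^c}) has an F_{boundary V}-measurable version. *)
Definition markov_field (d : nat) (R : realType) (dO : measure_display)
  (Om : measurableType dO) (P : probability Om R) (om : Om -> site d -> R) : Prop :=
  forall (V : set (site d)) (E : set (site d -> R)), cylsig V E ->
    exists h : (site d -> R) -> R, cyl_meas_fun (bdry V) h /\
      forall B, cylsig (~` V) B ->
        P (om @^-1` (E `&` B)) = (\int[P]_(x in om @^-1` B) (h (om x))%:E)%E.

(* kappa is a (regular) conditional law of (omega_v)_{v in Dl} given
   omega|_{V^c} = eta. *)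
Definition is_cond_law (d : nat) (R : realType) (dO : measure_display)
  (Om : measurableType dO) (P : probability Om R) (om : Om -> site d -> R)
  (Dl V : set (site d)) (kappa : (site d -> R) -> set (site d -> R) -> R) : Prop :=
  [/\ (forall eta, [/\ kappa eta setT = 1,
         (forall E, cylsig Dl E -> 0 <= kappa eta E) &
         (forall F : nat -> set (site d -> R), (forall n, cylsig Dl (F n)) ->
            trivIset setT F ->
            (fun n => \sum_(i < n) kappa eta (F i)) @ \oo --> kappa eta (\bigcup_n F n))]),
      (forall E, cylsig Dl E -> cyl_meas_fun (~` V) (fun eta => kappa eta E)) &
      (forall E B, cylsig Dl E -> cylsig (~` V) B ->
        P (om @^-1` (E `&` B)) = (\int[P]_(x in om @^-1` B) (kappa (om x) E)%:E)%E)].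

(* Generic form of (TC)/(TCG): pairs Dl A gives the set of pairs over which
   the sum in the bound ranges.  "RN derivative <= exp(C * S)" is written out
   as: kappa_eta(E) <= e^r kappa_eta'(E) for every F_Dl event E and every real
   r >= C * S (S may be +oo). *)
Definition TC_gen (d : nat) (R : realType) (dO : measure_display)
  (Om : measurableType dO) (P : probability Om R) (om : Om -> site d -> R)
  (pairs : set (site d) -> set (site d) -> set (site d * site d)) (C g : R) : Prop :=
  forall (V Dl : set (site d)), finite_set Dl -> Dl `<=` V ->
    (forall u v, Dl u -> ~ V v -> (1 < dist1 u v)%N) ->
    exists kappa, is_cond_law P om Dl V kappa /\
      forall A, A `<=` ~` V ->
      forall eta eta' : site d -> R, (forall v, 0 <= eta v) -> (forall v, 0 <= eta' v) ->
        (forall v, ~ V v -> ~ A v -> eta v = eta' v) ->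
        forall r : R,
          (C%:E * (\esum_(q in pairs Dl A) (expR (- g * (dist1 q.1 q.2)%:R))%:E)
             <= r%:E)%E ->
          forall E, cylsig Dl E -> kappa eta E <= expR r * kappa eta' E.

Definition TC (d : nat) (R : realType) (dO : measure_display)
  (Om : measurableType dO) (P : probability Om R) (om : Om -> site d -> R) (C g : R) :=
  TC_gen P om (fun Dl A => bdry Dl `*` bdry A) C g.

Definition TCG (d : nat) (R : realType) (dO : measure_display)
  (Om : measurableType dO) (P : probability Om R) (om : Om -> site d -> R) (C g : R) :=
  TC_gen P om (fun Dl A => Dl `*` A) C g.

(* Law of the increments: finitely supported (= bounded) probability on Z^d. *)
Definition step_law (d : nat) (R : realType) (supp : seq 'rV[int]_d)
  (p : 'rV[int]_d -> R) : Prop :=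
  [/\ uniq supp, (forall x, 0 <= p x), (forall x, x \notin supp -> p x = 0)
    & \sum_(x <- supp) p x = 1].

Fixpoint incr_seqs (T : Type) (s : seq T) (n : nat) : seq (seq T) :=
  match n with
  | 0 => [:: [::]]
  | n'.+1 => [seq x :: l | x <- s, l <- incr_seqs s n']
  end.

(* Z_N^{beta,eta} = E^S_0[exp(beta sum_{k=1}^N eta_{k,S_k})], S_k = X_1+...+X_k,
   the X_i i.i.d. with law p. *)
Definition partZ (d : nat) (R : realType) (supp : seq 'rV[int]_d)
  (p : 'rV[int]_d -> R) (eta : site d -> R) (beta : R) (N : nat) : R :=
  \sum_(l <- incr_seqs supp N)
    (\prod_(x <- l) p x) *
    expR (beta * \sum_(k < N) eta (k.+1, \sum_(i < k.+1) nth 0 l i)).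

Definition Wpart (d : nat) (R : realType) (dO : measure_display)
  (Om : measurableType dO) (P : probability Om R) (om : Om -> site d -> R)
  (supp : seq 'rV[int]_d) (p : 'rV[int]_d -> R) (N : nat) (beta : R) (x : Om) : R :=
  partZ supp p (om x) beta N / fine (\int[P]_y (partZ supp p (om y) beta N)%:E)%E.

Definition essnorm (R : realType) (T : R) (f : R -> R) : \bar R :=
  ess_sup (mrestr (@lebesgue_measure R) (measurable_itv `[0%R, T]))
          (fun b => (`|f b|)%:E).

(* Main.v *)
Require Import Defs.
From HB Require Import structures.
From mathcomp Require Import all_boot all_order all_algebra.
From mathcomp Require Import all_classical all_reals all_analysis ess_sup_inf.
From mathcomp Require Import ring lra.
Import Order.TTheory GRing.Theory Num.Theory.
Import numFieldNormedType.Exports.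
Local Open Scope classical_set_scope.
Local Open Scope ring_scope.
From mathcomp Require Import measurable_realfun.
Section pw.
Context {R : realType}.
Implicit Types u v : R.

Lemma abs_le_expR u : `|u| <= expR `|u|.
Proof. by have := expR_ge1Dx `|u|; lra. Qed.

Lemma expRm1_le u : expR u - 1 <= u * expR u.
Proof.
have h := expR_ge1Dx (- u); rewrite expRN in h.
have e0 := expR_gt0 u.
have : (1 - u) * expR u <= (expR u)^-1 * expR u by rewrite ler_pM2r.
rewrite mulVf ?gt_eqF //; lra.
Qed.

Lemma expRm1_abs u : `|expR u - 1| <= `|u| * expR `|u|.
Proof.
have h1 := expR_ge1Dx u; have h2 := expRm1_le u.
have e0 := expR_gt0 u.
case: (lerP 0 u) => u0.
  rewrite ger0_norm ?(ger0_norm u0); lra.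
have hl : expR u < 1 by rewrite expR_lt1.
rewrite (ltr0_norm u0) (ler0_norm (x:=expR u - 1)); last lra.
have : 1 <= expR (- u) by have := expR_ge1Dx (- u); lra.
move=> h3. have : - u <= - u * expR (- u) by rewrite ler_peMr //; lra.
lra.
Qed.

Lemma expRm1u_abs u : `|expR u - 1 - u| <= u ^+ 2 * expR `|u|.
Proof.
have h1 := expR_ge1Dx u; have h2 := expRm1_le u.
have h3 := expRm1_abs u.
rewrite ger0_norm; last lra.
have : expR u - 1 - u <= u * (expR u - 1) by lra.
move=> h4; apply: (le_trans h4).
apply: (le_trans (ler_norm _)); rewrite normrM.
have hu := normr_ge0 u.
have -> : u ^+ 2 = `|u| ^+ 2 by rewrite real_normK ?num_real.
have := ler_wpM2l hu h3; rewrite mulrA -expr2 //.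
Qed.
End pw.
Section ExpMom.
Context {R : realType} {dO : measure_display} {Om : measurableType dO}
  (P : probability Om R).

Definition ExpMom (f : Om -> R) := measurable_fun setT f /\
  forall c, P.-integrable setT (fun x => (expR (c * f x))%:E).

Lemma mexp (f : Om -> R) c : measurable_fun setT f ->
  measurable_fun setT (fun x => expR (c * f x)).
Proof.
move=> mf; apply: measurableT_comp; first exact: measurable_expR.
by apply: measurable_funM => //; exact: measurable_cst.
Qed.

Lemma int_le (f g : Om -> R) : measurable_fun setT f ->
  (forall x, `|f x| <= g x) -> P.-integrable setT (EFin \o g) ->
  P.-integrable setT (EFin \o f).
Proof.
move=> mf fg ig; apply: le_integrable ig => //.
  exact/measurable_EFinP.
move=> x _ /=; rewrite lee_fin; apply: (le_trans (fg x)).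
exact: ler_norm.
Qed.

Lemma int_cst (k : R) : P.-integrable setT (fun _ => k%:E).
Proof. exact: (finite_measure_integrable_cst P k measurableT). Qed.

Lemma eqint (f g : Om -> \bar R) : (forall x, f x = g x) ->
  P.-integrable setT f -> P.-integrable setT g.
Proof. by move=> e; have -> : f = g by apply/funext. Qed.

Lemma int_add (f g : Om -> R) : P.-integrable setT (EFin \o f) ->
  P.-integrable setT (EFin \o g) -> P.-integrable setT (EFin \o (f \+ g)).
Proof.
move=> hf hg; apply: eqint (integrableD measurableT hf hg).
by move=> x /=.
Qed.

Lemma int_scale (k : R) (f : Om -> R) : P.-integrable setT (EFin \o f) ->
  P.-integrable setT (EFin \o (fun x => k * f x)).
Proof.
move=> hf; apply: eqint (integrableZl measurableT k hf).
by move=> x /=.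
Qed.

Lemma EM_add f g : ExpMom f -> ExpMom g -> ExpMom (f \+ g).
Proof.
move=> [mf hf] [mg hg]; split; first exact: measurable_funD.
move=> c; apply: (@int_le _ (fun x => expR ((2 * c) * f x) + expR ((2 * c) * g x))).
- exact: (mexp _ c (measurable_funD mf mg)).
- move=> x /=; rewrite ger0_norm ?expR_ge0 //.
  have e1 := expR_gt0 (2 * c * f x); have e2 := expR_gt0 (2 * c * g x).
  case: (lerP (c * f x) (c * g x)) => h.
    have : expR (c * (f x + g x)) <= expR (2 * c * g x) by rewrite ler_expR; lra.
    lra.
  have : expR (c * (f x + g x)) <= expR (2 * c * f x) by rewrite ler_expR; lra.
  lra.
- exact: int_add (hf _) (hg _).
Qed.

Lemma EM_abs f : ExpMom f -> ExpMom (fun x => `|f x|).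
Proof.
move=> [mf hf]; split; first exact: measurableT_comp.
move=> c; apply: (@int_le _ (fun x => expR (c * f x) + expR ((- c) * f x))).
- by apply: mexp; apply: measurableT_comp => //.
- move=> x /=; rewrite ger0_norm ?expR_ge0 //.
  have e1 := expR_gt0 (c * f x); have e2 := expR_gt0 (- c * f x).
  case: (lerP 0 (f x)) => h.
    rewrite ger0_norm //; lra.
  rewrite ltr0_norm // mulrN -mulNr; lra.
- exact: int_add (hf _) (hf _).
Qed.

Lemma EM_scale k f : ExpMom f -> ExpMom (fun x => k * f x).
Proof.
move=> [mf hf]; split.
  by apply: measurable_funM => //; exact: measurable_cst.
move=> c; apply: eqint (hf (c * k)) => x.
by rewrite mulrA.
Qed.

Lemma EM_cst k : ExpMom (fun _ => k).
Proof.
split; first exact: measurable_cst.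
by move=> c; exact: int_cst.
Qed.

Lemma EM_sum (I : Type) (s : seq I) (F : I -> Om -> R) :
  (forall i, ExpMom (F i)) -> ExpMom (fun x => \sum_(i <- s) F i x).
Proof.
move=> hF; elim: s => [|i s ih].
  have -> : (fun x => \sum_(i <- [::]) F i x) = (fun _ => 0).
    by apply/funext => x; rewrite big_nil.
  exact: EM_cst.
have -> : (fun x => \sum_(j <- i :: s) F j x) = (F i \+ fun x => \sum_(j <- s) F j x).
  by apply/funext => x; rewrite big_cons.
exact: EM_add (hF i) ih.
Qed.

Lemma EM_int f c : ExpMom f -> P.-integrable setT (EFin \o (fun x => expR (c * f x))).
Proof. by case=> _ h; exact: h. Qed.

End ExpMom.
Section ES.
Context {R : realType}.
Variable T : R.
Hypothesis T0 : 0 < T.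
Let mu := mrestr (@lebesgue_measure R) (measurable_itv `[0%R, T]).

Lemma mu_setT : mu setT = T%:E.
Proof.
rewrite /mu /mrestr setTI lebesgue_measure_itv /= lte_fin T0 /=.
by rewrite sube0.
Qed.

Lemma ae_on_itv (Q : R -> Prop) : (forall b, 0 <= b <= T -> Q b) ->
  \forall b \ae mu, Q b.
Proof.
move=> hQ; suff : mu.-negligible (~` [set b | Q b]) by [].
exists (~` `[0%R, T]%classic); split.
- by apply: measurableC; exact: measurable_itv.
- by rewrite /mu /mrestr setICl measure0.
- move=> b /= nQ hb; apply: nQ; apply: hQ.
  by move: hb; rewrite /= in_itv.
Qed.
End ES.
Section ES2.
Context {R : realType}.

Lemma cont_gt_ball (g : R -> R) (b y : R) : {for b, continuous g} -> y < g b ->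
  exists2 e, 0 < e & forall b', `|b - b'| < e -> y < g b'.
Proof.
move=> hg hy.
have := @cvgr_gt R _ _ _ g (g b) hg y hy; move=> /(_ _) hn.
have [e /= e0 H] := (@nbhs_ballP R R^o b (fun t => y < g t)).1 hn.
exists e => // bq hbq.
Qed.

Lemma rat_near (T b e : R) : 0 < T -> 0 <= b <= T -> 0 < e ->
  exists q : rat, 0 <= (ratr q : R) <= T /\ `|b - ratr q| < e.
Proof.
move=> T0 /andP[b0 bT] e0.
have lohi : Num.max 0 (b - e) < Num.min T (b + e).
  rewrite lt_min !gt_max; apply/andP; split; apply/andP; split; lra.
have [q] := rat_in_itvoo lohi.
rewrite in_itv /= gt_max lt_min => /andP[/andP[h1 h2] /andP[h3 h4]].
exists q; split; first by apply/andP; split; lra.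
rewrite ltr_norml; apply/andP; split; lra.
Qed.
End ES2.
Section ES3.
Context {R : realType}.

Lemma cont_norm (f : R -> R) : continuous f -> continuous (fun b => `|f b|).
Proof.
move=> hf b; apply: continuous_comp; first exact: hf.
exact: norm_continuous.
Qed.

Lemma ess_gt_iff (T : R) (T0 : 0 < T) (f : R -> R) (y : R) : continuous f ->
  (y%:E < essnorm T f)%E <->
  exists q : rat, 0 <= (ratr q : R) <= T /\ y < `|f (ratr q)|.
Proof.
move=> hf; have hn := @cont_norm f hf.
split.
- move=> hlt; apply: contrapT => hnq; move: hlt; rewrite ltNge => /negP; apply.
  apply/ess_supP; apply: ae_on_itv => b hb; rewrite lee_fin leNgt; apply/negP => hfb.
  have [e e0 He] := @cont_gt_ball R _ _ _ (hn b) hfb.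
  have [q [hq1 hq2]] := @rat_near R _ _ _ T0 hb e0.
  by apply: hnq; exists q; split => //; exact: He.
- move=> [q [hq hyq]]; rewrite ltNge; apply/negP => /ess_supP hae.
  case: hae => A [mA muA sub].
  have [e e0 He] := @cont_gt_ball R _ _ _ (hn (ratr q)) hyq.
  have lohi : Num.max 0 (ratr q - e) < Num.min T (ratr q + e).
    move: hq => /andP[h1 h2].
    rewrite lt_min !gt_max; apply/andP; split; apply/andP; split; lra.
  have sI : `]Num.max 0 (ratr q - e), Num.min T (ratr q + e)[%classic `<=` A `&` `[0%R, T]%classic.
    move=> b /=; rewrite in_itv /= gt_max lt_min => /andP[/andP[h1 h2] /andP[h3 h4]].
    split; last by rewrite in_itv /=; apply/andP; split; lra.
    apply: sub => /= hle; move: hle; rewrite lee_fin leNgt => /negP; apply.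
    apply: He; rewrite ltr_norml; apply/andP; split; lra.
  have := le_measure (@lebesgue_measure R) (mem_set (measurable_itv _))
    (mem_set (measurableI _ _ mA (measurable_itv `[0%R, T]))) sI.
  have muA' : (@lebesgue_measure R) (A `&` `[0%R, T]%classic) = 0%E := muA.
  move=> H; have {H} : ((@lebesgue_measure R) `]Num.max 0%R (ratr q - e)%R, Num.min T (ratr q + e)%R[%classic <= (0 : \bar R))%E.
    apply: (le_trans H).
    have h0 : ((0 : \bar R) <= 0)%E by [].
    exact: (@eq_ind_r _ 0%E (fun z => (z <= 0)%E) h0 _ muA').
  rewrite lebesgue_measure_itv /= lte_fin lohi /= -EFinB lee_fin.
  lra.
Qed.
End ES3.
Section ES4.
Context {R : realType} {dO : measure_display} {Om : measurableType dO}
  (P : probability Om R).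

Lemma ess_meas (T : R) (T0 : 0 < T) (F : R -> Om -> R) :
  (forall b, measurable_fun setT (F b)) -> (forall x, continuous (F ^~ x)) ->
  measurable_fun setT (fun x => essnorm T (F ^~ x)).
Proof.
move=> mF cF _.
apply: (measurability _ (ErealGenOInfty.measurableE R)) => //.
move=> _ [_ [r ->] <-].
rewrite [X in measurable X](_ : _ = \bigcup_(q : rat)
   (if (0 <= (ratr q : R) <= T) then setT `&` [set x | r < `|F (ratr q) x|] else set0)).
  apply: bigcupT_measurable_rat => q; case: ifP => _ //.
  rewrite -preimage_itvoy.
  have mn : measurable_fun setT (fun x => `|F (ratr q) x|).
    apply: measurableT_comp => //; exact: mF.
  exact: mn measurableT _ (measurable_itv _).
rewrite predeqE => x; split.
- move=> [_ /=]; rewrite in_itv /= andbT => /(@ess_gt_iff R T T0 _ r (cF x)) [q [hq hr]].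
  by exists q => //; rewrite hq.
- move=> [q _]; case: ifP => hq // [_ /= hr]; split => //.
  rewrite /= in_itv /= andbT; apply/(@ess_gt_iff R T T0 _ r (cF x)).
  by exists q.
Qed.

Lemma ess_sq_int (T : R) (T0 : 0 < T) (F : R -> Om -> R) (K : Om -> R) :
  (forall b, measurable_fun setT (F b)) -> (forall x, continuous (F ^~ x)) ->
  (forall x b, 0 <= b <= T -> `|F b x| <= K x) ->
  P.-integrable setT (EFin \o (fun x => K x ^+ 2)) ->
  P.-integrable setT (fun x => let e := essnorm T (F ^~ x) in (e * e)%E).
Proof.
move=> mF cF hK iK.
have mu0 : (0 < mrestr (@lebesgue_measure R) (measurable_itv `[0%R, T]) setT)%E.
  by rewrite mu_setT // lte_fin.
have e0 x : (0 <= essnorm T (F ^~ x))%E.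
  by apply: ess_sup_ger => // t /=; rewrite lee_fin.
have eK x : (essnorm T (F ^~ x) <= (K x)%:E)%E.
  by apply/ess_supP; apply: ae_on_itv => b hb; rewrite lee_fin hK.
apply: le_integrable iK => //.
  by have me := @ess_meas T T0 F mF cF; exact: (emeasurable_funM me me).
move=> x _ /=.
have h1 := e0 x; have h2 := eK x.
rewrite gee0_abs; last exact: mule_ge0.
have K0 : 0 <= K x by rewrite -lee_fin; exact: le_trans h2.
rewrite ger0_norm ?exprn_ge0 // expr2 EFinM.
by apply: lee_pmul.
Qed.
End ES4.

Section Gen.
Context {R : realType}.

Lemma sum_ge_term (I : eqType) (s : seq I) (F : I -> R) i :
  (forall j, 0 <= F j) -> i \in s -> F i <= \sum_(j <- s) F j.
Proof.
move=> F0; elim: s => // j s ih; rewrite inE big_cons => /orP[/eqP ->|h].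
  by rewrite lerDl sumr_ge0.
by apply: (le_trans (ih h)); rewrite lerDr.
Qed.

Lemma is_derive_exp_lin (a h b : R) :
  is_derive b 1 (fun b => a * expR (b * h)) ((a * h) * expR (b * h)).
Proof.
have h1 : is_derive b 1 (fun b => b * h) h.
  have -> : (fun b => b * h) = h \*: id by apply/funext => t /=; rewrite mulrC.
  have := @is_deriveZ R R^o R^o id h b 1 1 _.
  move=> H; apply: (is_derive_eq (H (is_derive_id _ _))); exact: mulr1.
have h2 : is_derive b 1 (expR \o (fun b => b * h)) (expR (b * h) * h).
  exact: is_derive1_comp.
have := @is_deriveZ R R R (expR \o (fun b => b * h)) a b 1 _ h2.
by rewrite /= -mulrA [_ * h]mulrC.
Qed.

Lemma is_derive_sumexp (I : Type) (s : seq I) (a h : I -> R) (b : R) :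
  is_derive b 1 (fun b => \sum_(l <- s) a l * expR (b * h l))
    (\sum_(l <- s) (a l * h l) * expR (b * h l)).
Proof.
elim: s => [|l s ih].
  have -> : (fun b => \sum_(l <- [::]) a l * expR (b * h l)) = cst 0.
    by apply/funext => t; rewrite big_nil.
  by rewrite big_nil; exact: is_derive_cst.
have -> : (fun b => \sum_(j <- l :: s) a j * expR (b * h j)) =
  (fun b => a l * expR (b * h l)) + (fun b => \sum_(j <- s) a j * expR (b * h j)).
  by apply/funext => t; rewrite big_cons.
rewrite big_cons; apply: is_deriveD => //; exact: is_derive_exp_lin.
Qed.

Lemma is_derive_cont (f : R -> R) (b df : R) : is_derive b 1 f df -> {for b, continuous f}.
Proof.
move=> [hd _]; apply: differentiable_continuous.
exact/derivable1_diffP.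
Qed.

End Gen.

Lemma nseq_in {d : nat} (supp : seq 'rV[int]_d) x0 n : x0 \in supp ->
  nseq n x0 \in incr_seqs supp n.
Proof.
move=> hx; elim: n => [|n ih] /=; first by rewrite inE.
exact: (allpairs_f (fun x l => x :: l) hx ih).
Qed.

Section Model.
Context {d : nat} {R : realType} {dO : measure_display} {Om : measurableType dO}
  (P : probability Om R) (supp : seq 'rV[int]_d) (p : 'rV[int]_d -> R)
  (om : Om -> site d -> R) (N : nat).
Hypothesis hstep : step_law supp p.
Hypothesis mom : forall v, measurable_fun setT (fun x => om x v).
Hypothesis iom : forall (beta : R) v,
  P.-integrable setT (fun x => (expR (beta * om x v))%:E).

Definition Ls := incr_seqs supp N.
Definition w (l : seq 'rV[int]_d) : R := \prod_(x <- l) p x.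
Definition st (l : seq 'rV[int]_d) (k : 'I_N) : site d :=
  (k.+1, \sum_(i < k.+1) nth 0 l i).
Definition H l x := \sum_(k < N) om x (st l k).
Definition Zf b x := \sum_(l <- Ls) w l * expR (b * H l x).
Definition Z1 b x := \sum_(l <- Ls) (w l * H l x) * expR (b * H l x).
Definition Y x := \sum_(l <- Ls) `|H l x|.
Definition Ws := \sum_(l <- Ls) w l.

Lemma ZfE b x : partZ supp p (om x) b N = Zf b x.
Proof. by []. Qed.

Lemma w_ge0 l : 0 <= w l.
Proof. by apply: prodr_ge0 => i _; case: hstep. Qed.

Lemma Ws_ge0 : 0 <= Ws.
Proof. by apply: sumr_ge0 => i _; exact: w_ge0. Qed.

Lemma EM_H l : ExpMom P (H l).
Proof.
apply: EM_sum => k; split; first exact: mom.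
by move=> c; exact: iom.
Qed.

Lemma EM_Y : ExpMom P Y.
Proof. by apply: EM_sum => l; apply: EM_abs; exact: EM_H. Qed.

Lemma mH l : measurable_fun setT (H l).
Proof. by case: (EM_H l). Qed.

Lemma mY : measurable_fun setT Y.
Proof. by case: EM_Y. Qed.

Lemma Y_ge0 x : 0 <= Y x.
Proof. by apply: sumr_ge0 => l _. Qed.

Lemma H_le_Y l x : l \in Ls -> `|H l x| <= Y x.
Proof. by move=> hl; apply: (@sum_ge_term R _ _ (fun l => `|H l x|) l (fun _ => normr_ge0 _) hl). Qed.

Lemma sum_bound (F : seq 'rV[int]_d -> R) (K : R) :
  (forall l, l \in Ls -> `|F l| <= w l * K) ->
  `|\sum_(l <- Ls) F l| <= Ws * K.
Proof.
move=> hF; apply: (le_trans (ler_norm_sum _ _ _)).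
rewrite /Ws mulr_suml big_seq [X in _ <= X]big_seq.
by apply: ler_sum => l hl; exact: hF.
Qed.

Lemma expbH_le b l x : l \in Ls -> expR (b * H l x) <= expR (`|b| * Y x).
Proof.
move=> hl; rewrite ler_expR.
apply: (le_trans (ler_norm _)); rewrite normrM.
by apply: ler_wpM2l => //; exact: H_le_Y.
Qed.

Lemma Zf_bound b x : `|Zf b x| <= Ws * expR (`|b| * Y x).
Proof.
apply: sum_bound => l hl.
rewrite normrM (ger0_norm (w_ge0 l)) ger0_norm ?expR_ge0 //.
by apply: ler_wpM2l; [exact: w_ge0 | exact: expbH_le].
Qed.

Lemma Z1_bound b x : `|Z1 b x| <= Ws * expR ((`|b| + 1) * Y x).
Proof.
apply: sum_bound => l hl.
rewrite !normrM (ger0_norm (w_ge0 l)) (ger0_norm (expR_ge0 _)) -mulrA.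
apply: ler_wpM2l; first exact: w_ge0.
have h1 : `|H l x| <= expR (Y x).
  apply: (le_trans (H_le_Y l x hl)).
  by have := abs_le_expR (Y x); rewrite ger0_norm //; exact: Y_ge0.
have h2 := expbH_le b l x hl.
rewrite mulrDl mul1r expRD [X in _ <= X]mulrC.
apply: ler_pM => //; exact: expR_ge0.
Qed.

Lemma int_expY (K k : R) :
  P.-integrable setT (EFin \o (fun x => K * expR (k * Y x))).
Proof. by apply: int_scale; exact: EM_int EM_Y. Qed.

Lemma mZf b : measurable_fun setT (Zf b).
Proof.
apply: measurable_sum => l; apply: measurable_funM; first exact: measurable_cst.
by apply: mexp; exact: mH.
Qed.

Lemma mZ1 b : measurable_fun setT (Z1 b).
Proof.
apply: measurable_sum => l; apply: measurable_funM.
  by apply: measurable_funM; [exact: measurable_cst | exact: mH].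
by apply: mexp; exact: mH.
Qed.

Lemma int_Zf b : P.-integrable setT (EFin \o Zf b).
Proof.
apply: int_le (int_expY Ws `|b|); first exact: mZf.
exact: Zf_bound.
Qed.

Lemma int_Z1 b : P.-integrable setT (EFin \o Z1 b).
Proof.
apply: int_le (int_expY Ws (`|b| + 1)); first exact: mZ1.
exact: Z1_bound.
Qed.

Lemma Zf_derive x (b : R) : is_derive b 1 (Zf ^~ x) (Z1 b x).
Proof. by have := @is_derive_sumexp R _ Ls w (H ^~ x) b. Qed.

Lemma Z1_derive x (b : R) : is_derive b 1 (Z1 ^~ x)
  (\sum_(l <- Ls) ((w l * H l x) * H l x) * expR (b * H l x)).
Proof. by have := @is_derive_sumexp R _ Ls (fun l => w l * H l x) (H ^~ x) b. Qed.

Lemma Zf_cont x : continuous (Zf ^~ x).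
Proof. by move=> b; exact: is_derive_cont (Zf_derive x b). Qed.

Lemma Z1_cont x : continuous (Z1 ^~ x).
Proof. by move=> b; exact: is_derive_cont (Z1_derive x b). Qed.


Definition c b := \int[P]_x Zf b x.
Definition c1 b := \int[P]_x Z1 b x.

Lemma itv_mem (b x : R) : `]b - 1, b + 1[%classic x -> `|x| <= `|b| + 1.
Proof.
rewrite /= in_itv /= => /andP[h1 h2].
have := ler_normD (x - b) b; rewrite subrK => h.
have : `|x - b| <= 1 by rewrite ler_norml; apply/andP; split; lra.
lra.
Qed.

Lemma itv_self (b : R) : `]b - 1, b + 1[%classic b.
Proof. by rewrite /= in_itv /=; apply/andP; split; lra. Qed.

Lemma bound_shift (b x : R) y : `]b - 1, b + 1[%classic x ->
  Ws * expR ((`|x| + 1) * Y y) <= Ws * expR ((`|b| + 2) * Y y).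
Proof.
move=> hx; apply: ler_wpM2l; first exact: Ws_ge0.
rewrite ler_expR; apply: ler_wpM2r; first exact: Y_ge0.
have := itv_mem b x hx; lra.
Qed.

Lemma c_derive (b : R) : is_derive b 1 c (c1 b).
Proof.
have intf : forall x, `]b - 1, b + 1[%classic x -> P.-integrable setT (EFin \o Zf x).
  by move=> x _; exact: int_Zf.
have derf : forall x y, `]b - 1, b + 1[%classic x -> setT y -> derivable (Zf ^~ y) x 1.
  by move=> x y _ _; case: (Zf_derive y x).
have G0 : forall y, 0 <= Ws * expR ((`|b| + 2) * Y y).
  by move=> y; apply: mulr_ge0; [exact: Ws_ge0 | exact: expR_ge0].
have iG := int_expY Ws (`|b| + 2).
have Gub : forall x y, `]b - 1, b + 1[%classic x -> setT y ->
    `|partial1of2 Zf x y| <= Ws * expR ((`|b| + 2) * Y y).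
  move=> x y hx _; rewrite partial1of2E.
  have [_ ->] := Zf_derive y x.
  exact: le_trans (Z1_bound x y) (bound_shift b x y hx).
have hd := derivable_under_integral (mu := P) measurableT (itv_self b) intf derf G0 iG Gub.
have hv := differentiation_under_integral (mu := P) measurableT (itv_self b) intf derf G0 iG Gub.
apply: DeriveDef; first exact: hd.
rewrite -derive1E; rewrite /c hv /c1.
apply: eq_Rintegral => y _ /=; rewrite partial1of2E.
by have [_ ->] := Zf_derive y b.
Qed.

Lemma c_cont : continuous c.
Proof. by move=> b; exact: is_derive_cont (c_derive b). Qed.

Lemma c1_cont : continuous c1.
Proof.
move=> b.
have intf : forall x, `]b - 1, b + 1[%classic x -> P.-integrable setT (EFin \o Z1 x).
  by move=> x _; exact: int_Z1.
have cf : \forall y \ae P, setT y -> {in `]b - 1, b + 1[%classic, continuous (Z1 ^~ y)}.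
  by apply: aeW => y _ t _; exact: Z1_cont.
have iG := int_expY Ws (`|b| + 2).
have Gub : forall x, `]b - 1, b + 1[%classic x ->
    \forall y \ae P, setT y -> `|Z1 x y| <= Ws * expR ((`|b| + 2) * Y y).
  move=> x hx; apply: aeW => y _.
  exact: le_trans (Z1_bound x y) (bound_shift b x y hx).
have := continuity_under_integral (mu := P) measurableT intf cf iG Gub.
move=> /(_ b); apply; exact/mem_set/itv_self.
Qed.


Lemma int_eY k : P.-integrable setT (EFin \o (fun x => expR (k * Y x))).
Proof. exact: (EM_int P Y k EM_Y). Qed.

Lemma RintY_gt0 k : 0 < \int[P]_x expR (k * Y x).
Proof.
set A := \int[P]_x expR (k * Y x).
set B := \int[P]_x expR ((- k) * Y x).
have A0 : 0 <= A by apply: Rintegral_ge0 => x _; exact: expR_ge0.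
have B0 : 0 <= B by apply: Rintegral_ge0 => x _; exact: expR_ge0.
case: (ltrP 0 A) => // hA; have {hA} A00 : A = 0 by lra.
exfalso.
have l0 : 0 < B + 1 by lra.
have pw : forall x, 2 <= (B + 1) * expR (k * Y x) + (B + 1)^-1 * expR ((- k) * Y x).
  move=> x; set a := (B + 1) * expR (k * Y x).
  set b := (B + 1)^-1 * expR ((- k) * Y x).
  have a0 : 0 < a by apply: mulr_gt0 => //; exact: expR_gt0.
  have ab : a * b = 1.
    rewrite /a /b mulrACA mulfV ?gt_eqF // mul1r mulNr expRN mulfV //.
    by rewrite expR_eq0.
  have := sqr_ge0 (a - 1); nra.
have i1 := int_scale P (B + 1) _ (int_eY k).
have i2 := int_scale P (B + 1)^-1 _ (int_eY (- k)).
have := @le_Rintegral _ _ _ P setT (fun _ => 2)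
  (fun x => (B + 1) * expR (k * Y x) + (B + 1)^-1 * expR ((- k) * Y x))
  measurableT (int_cst P 2) (int_add P _ _ i1 i2) (fun x _ => pw x).
have P1 : fine (P setT) = 1 by rewrite probability_setT.
rewrite Rintegral_cst // P1 mulr1.
rewrite RintegralD // RintegralZl // ?RintegralZl //.
rewrite -/A -/B A00 mulr0 add0r.
have : (B + 1)^-1 * B < 1.
  by rewrite mulrC ltr_pdivrMr // mul1r; lra.
lra.
all: exact: int_eY.
Qed.

Lemma exists_pos : exists2 x0, x0 \in supp & 0 < p x0.
Proof.
case: hstep => _ p0 _ s1; apply: contrapT => hn.
have : \sum_(x <- supp) p x <= 0.
  rewrite big_seq; apply: sumr_le0 => x hx; rewrite leNgt; apply/negP => hp.
  by apply: hn; exists x.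
by rewrite s1; lra.
Qed.


Lemma Zf_lb_ex : exists2 w0, 0 < w0 &
  forall b x, w0 * expR (- (`|b| * Y x)) <= Zf b x.
Proof.
have [x0 hx hp] := exists_pos.
have hl0 : nseq N x0 \in Ls by exact: nseq_in.
have w0p : 0 < w (nseq N x0).
  rewrite /w big_seq; apply: prodr_gt0 => i; rewrite mem_nseq => /andP[_ /eqP ->].
  exact: hp.
exists (w (nseq N x0)) => // b x.
apply: le_trans (@sum_ge_term R _ _ (fun l => w l * expR (b * H l x)) _ _ hl0).
  apply: ler_wpM2l; first exact: ltW.
  rewrite ler_expR.
  have h1 : `|b * H (nseq N x0) x| <= `|b| * Y x.
    by rewrite normrM; apply: ler_wpM2l => //; exact: H_le_Y.
  have h2 := lerNnormlW h1.
  lra.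
by move=> l; apply: mulr_ge0; [exact: w_ge0 | exact: expR_ge0].
Qed.

Lemma Zf_gt0 b x : 0 < Zf b x.
Proof.
have [w0 w0p hlb] := Zf_lb_ex.
apply: lt_le_trans (hlb b x); apply: mulr_gt0 => //; exact: expR_gt0.
Qed.

Lemma c_gt0 b : 0 < c b.
Proof.
have [w0 w0p hlb] := Zf_lb_ex.
have hb : forall x, w0 * expR ((- `|b|) * Y x) <= Zf b x.
  by move=> x; rewrite mulNr; exact: hlb.
have i1 := int_scale P w0 _ (int_eY (- `|b|)).
have := @le_Rintegral _ _ _ P setT (fun x => w0 * expR ((- `|b|) * Y x)) (Zf b)
  measurableT i1 (int_Zf b) (fun x _ => hb x).
rewrite RintegralZl //; last exact: int_eY.
move=> h; rewrite /c; apply: (lt_le_trans _ h); apply: mulr_gt0 => //; exact: RintY_gt0.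
Qed.

Lemma WpartE b x : Wpart P om supp p N b x = Zf b x / c b.
Proof. by []. Qed.

Lemma dlnW x b : derive1 (fun b' => ln (Wpart P om supp p N b' x)) b =
  Z1 b x / Zf b x - c1 b / c b.
Proof.
have -> : (fun b' => ln (Wpart P om supp p N b' x)) =
    (@ln R \o (Zf ^~ x)) - (@ln R \o c).
  apply/funext => b'; rewrite WpartE /=.
  have h1 := Zf_gt0 b' x; have h2 := c_gt0 b'.
  rewrite lnM ?posrE ?invr_gt0 // lnV ?posrE //.
have d1 : is_derive b 1 (@ln R \o (Zf ^~ x)) ((Zf b x)^-1 * Z1 b x).
  apply: is_derive1_comp; last exact: Zf_derive.
  exact: is_derive1_ln (Zf_gt0 b x).
have d2 : is_derive b 1 (@ln R \o c) ((c b)^-1 * c1 b).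
  apply: is_derive1_comp; last exact: c_derive.
  exact: is_derive1_ln (c_gt0 b).
have d3 := is_deriveB d1 d2.
rewrite derive1E derive_val.
by rewrite ![_^-1 * _]mulrC.
Qed.

Lemma Wi b x : (Wpart P om supp p N b x)^-1 = c b * expR (- ln (Zf b x)).
Proof.
rewrite WpartE invf_div expRN lnK //; rewrite posrE; exact: Zf_gt0.
Qed.

Lemma mlnZf b : measurable_fun setT (fun x => expR (- ln (Zf b x))).
Proof.
apply: measurableT_comp; first exact: measurable_expR.
apply: (measurable_funN (f := fun x => ln (Zf b x))).
apply: measurableT_comp; first exact: measurable_ln.
exact: mZf.
Qed.

Lemma part1 (T : R) : 0 < T -> P.-integrable setT
  (fun x => let e := essnorm T (fun b => (Wpart P om supp p N b x)^-1) in (e * e)%E).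
Proof.
move=> T0.
have [w0 w0p hlb] := Zf_lb_ex.
have [bm hbm hmax] := @EVT_max R c 0 T (ltW T0) (continuous_subspaceT c_cont).
set Cm := c bm.
apply: (@ess_sq_int R dO Om P T T0 (fun b x => (Wpart P om supp p N b x)^-1)
   (fun x => Cm / w0 * expR (T * Y x))).
- move=> b; have -> : (fun x => (Wpart P om supp p N b x)^-1) =
      (fun x => c b * expR (- ln (Zf b x))) by apply/funext => x; exact: Wi.
  by apply: measurable_funM; [exact: measurable_cst | exact: mlnZf].
- move=> x; have -> : (fun b => (Wpart P om supp p N b x)^-1) =
      (c \* fun b => (Zf b x)^-1).
    by apply/funext => b; rewrite WpartE invf_div.
  move=> b; apply: continuousM; first exact: c_cont.
  apply: continuousV; first by rewrite gt_eqF // Zf_gt0.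
  exact: Zf_cont.
- move=> x b hb.
  have Zp := Zf_gt0 b x; have cp := c_gt0 b.
  rewrite WpartE invf_div ger0_norm; last by rewrite divr_ge0 // ltW.
  have cb : c b <= Cm by apply: hmax; rewrite in_itv /=.
  have zl : w0 * expR (- (T * Y x)) <= Zf b x.
    apply: le_trans (hlb b x); apply: ler_wpM2l; first exact: ltW.
    rewrite ler_expR lerN2; apply: ler_wpM2r; first exact: Y_ge0.
    by move: hb => /andP[h1 h2]; rewrite ger0_norm.
  rewrite ler_pdivrMr //.
  have e1 : expR (T * Y x) * expR (- (T * Y x)) = 1 by exact: expRxMexpNx_1.
  have Cm0 : 0 < Cm by exact: lt_le_trans cb.
  have k0 : 0 <= Cm / w0 * expR (T * Y x).
    by apply: mulr_ge0; [rewrite divr_ge0 // ltW | exact: expR_ge0].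
  apply: (le_trans cb); apply: le_trans (ler_wpM2l k0 zl).
  rewrite mulrACA -mulrA e1 mulr1 mulrAC -mulrA mulfV ?gt_eqF // mulr1.
  done.
- have hi := int_expY ((Cm / w0) ^+ 2) (2 * T).
  apply: (eqint P _ _ _ hi) => x /=.
  by congr (_%:E); rewrite [RHS]exprMn -expRM_natl mulrA.
Qed.

Lemma Z1_le b x : `|Z1 b x| <= Y x * Zf b x.
Proof.
apply: (le_trans (ler_norm_sum _ _ _)).
rewrite /Zf mulr_sumr big_seq [X in _ <= X]big_seq.
apply: ler_sum => l hl.
rewrite !normrM (ger0_norm (w_ge0 l)) (ger0_norm (expR_ge0 _)).
rewrite mulrCA mulrA; apply: ler_wpM2r; first exact: expR_ge0.
apply: ler_wpM2l; first exact: w_ge0.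
exact: H_le_Y.
Qed.

Lemma part2 (T : R) : 0 < T -> P.-integrable setT
  (fun x => let e := essnorm T
     (fun b => derive1 (fun b' => ln (Wpart P om supp p N b' x)) b) in (e * e)%E).
Proof.
move=> T0.
have gc : continuous (fun b => c1 b / c b).
  move=> b; apply: continuousM; first exact: c1_cont.
  apply: continuousV; first by rewrite gt_eqF // c_gt0.
  exact: c_cont.
have [bm hbm hmax] := @EVT_max R (fun b => `|c1 b / c b|) 0 T (ltW T0)
  (continuous_subspaceT (@cont_norm R _ gc)).
set Am := `|c1 bm / c bm|.
apply: (@ess_sq_int R dO Om P T T0
   (fun b x => derive1 (fun b' => ln (Wpart P om supp p N b' x)) b)
   (fun x => Y x + Am)).
- move=> b; have -> : (fun x => derive1 (fun b' => ln (Wpart P om supp p N b' x)) b) =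
      (fun x => Z1 b x * expR (- ln (Zf b x)) - c1 b / c b).
    apply/funext => x; rewrite dlnW expRN lnK //; rewrite posrE; exact: Zf_gt0.
  apply: measurable_funB; last exact: measurable_cst.
  by apply: measurable_funM; [exact: mZ1 | exact: mlnZf].
- move=> x; have -> : (fun b => derive1 (fun b' => ln (Wpart P om supp p N b' x)) b) =
      ((Z1 ^~ x) \* (fun b => (Zf b x)^-1)) - (fun b => c1 b / c b).
    by apply/funext => b; rewrite dlnW.
  move=> b; apply: continuousB; last exact: gc.
  apply: continuousM; first exact: Z1_cont.
  apply: continuousV; first by rewrite gt_eqF // Zf_gt0.
  exact: Zf_cont.
- move=> x b hb; rewrite dlnW.
  apply: (le_trans (ler_normB _ _)); apply: lerD; last first.
    by apply: hmax; rewrite in_itv /=.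
  have Zp := Zf_gt0 b x.
  rewrite normrM normfV (gtr0_norm Zp) ler_pdivrMr //.
  exact: Z1_le.
- have Am0 : 0 <= Am by exact: normr_ge0.
  apply: (@int_le R dO Om P _ (fun x => 2 * expR (2 * Y x) + 2 * Am ^+ 2)).
  + by apply: measurable_funX; apply: measurable_funD; [exact: mY | exact: measurable_cst].
  + move=> x; rewrite ger0_norm ?exprn_ge0 //; last by apply: addr_ge0 => //; exact: Y_ge0.
    have Y0 := Y_ge0 x.
    have h1 : Y x <= expR (Y x) by have := abs_le_expR (Y x); rewrite ger0_norm.
    have h2 : Y x ^+ 2 <= expR (2 * Y x).
      rewrite -[2]/(2%:R) expRM_natl !expr2; exact: ler_pM.
    have := sqr_ge0 (Y x - Am); rewrite !expr2 in h2 *; nra.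
  + exact: (int_add P _ _ (int_expY 2 2) (int_cst P (2 * Am ^+ 2))).
Qed.
End Model.


Theorem lemmaB2 (d : nat) (R : realType) (dO : measure_display)
  (Om : measurableType dO) (P : probability Om R)
  (supp : seq 'rV[int]_d) (p : 'rV[int]_d -> R) (om : Om -> site d -> R) (C g : R) :
  (3 <= d)%N ->
  step_law supp p ->
  (forall v, measurable_fun setT (fun x => om x v)) ->
  (forall (beta : R) v, P.-integrable setT (fun x => (expR (beta * om x v))%:E)) ->
  markov_field P om ->
  (TC P om C g \/ TCG P om C g) ->
  forall (N : nat) (T : R), 0 < T ->
    P.-integrable setT
      (fun x => let e := essnorm T (fun b => (Wpart P om supp p N b x)^-1) in (e * e)%E) /\
    P.-integrable setT
      (fun x => let e := essnorm T
                   (fun b => derive1 (fun b' => ln (Wpart P om supp p N b' x)) b) in (e * e)%E).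
Proof.
move=> _ hs hm hi _ _ N T T0; split.
- exact: (part1 P supp p om N hs hm hi T T0).
- exact: (part2 P supp p om N hs hm hi T T0).
Qed.
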